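(* Let $((x_n,y_n))_{n\in\mathbb N}$ be a sequence in $[0,\infty)^2$ such that $\sum_n(x_n,y_n)$ converges, and let $k\in\mathbb N$. Write $E:=E(x_n,y_n)$. (a) Let $A:=\{n:\ x_n<x_k\}$. If $x_k>\sum_{n\in A}x_n$, then $(\sum_{n\in A}x_n,\,x_k)$ is an $x$-gap of $E$. (b) Let $A:=\{n:\ y_n<y_k\}$. If $y_k>\sum_{n\in A}y_n$, then $(\sum_{n\in A}y_n,\,y_k)$ is a $y$-gap of $E$. (c) Assume that $A:=\{n:\ x_n<x_k\}=\{n:\ y_n<y_k\}$. If $x_k>\sum_{n\in A}x_n$ and $y_k>\sum_{n\in A}y_n$, then $(\sum_{n\in A}x_n,\,x_k)\times(\sum_{n\in A}y_n,\,y_k)$ is a rectangular gap of $E$.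
   Context: $E(x_n,y_n):=\{\sum_{n\in B}(x_n,y_n):\ B\subset\mathbb N\}$ is the achievement set of the series. For $A\subset\mathbb R^2$ and reals $a<b$, $c<d$: the set $(a,b)\times(c,d)$ is a rectangular gap of $A$ if $([a,b]\times[c,d])\cap A=\{(a,c),(b,d)\}$; the interval $(a,b)$ is an $x$-gap of $A$ if there exist $c,d\in\mathbb R$ with $(a,c),(b,d)\in A$ and $((a,b)\times\mathbb R)\cap A=\emptyset$; the interval $(c,d)$ is a $y$-gap of $A$ if there exist $a,b\in\mathbb R$ with $(a,c),(b,d)\in A$ and $(\mathbb R\times(c,d))\cap A=\emptyset$. *)

(* Defs.v *)
From Stdlib Require Import Reals.
From Coquelicot Require Import Coquelicot.
Open Scope R_scope.

(* Subsets B of N are represented by their indicator B : nat -> bool. *)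
Definition restrict (B : nat -> bool) (u : nat -> R) : nat -> R :=
  fun n => if B n then u n else 0.

Definition achievement_set (x y : nat -> R) : R * R -> Prop :=
  fun p => exists B : nat -> bool,
    is_series (restrict B x) (fst p) /\ is_series (restrict B y) (snd p).

Definition sum_below (u : nat -> R) (k : nat) : R :=
  Series (fun n => if Rlt_dec (u n) (u k) then u n else 0).

Definition rect_gap (A : R * R -> Prop) (a b c d : R) : Prop :=
  a < b /\ c < d /\
  forall p : R * R,
    ((a <= fst p <= b /\ c <= snd p <= d) /\ A p) <-> (p = (a, c) \/ p = (b, d)).

Definition x_gap (A : R * R -> Prop) (a b : R) : Prop :=
  a < b /\ (exists c d : R, A (a, c) /\ A (b, d)) /\
  (forall p : R * R, A p -> ~ (a < fst p < b)).

Definition y_gap (A : R * R -> Prop) (c d : R) : Prop :=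
  c < d /\ (exists a b : R, A (a, c) /\ A (b, d)) /\
  (forall p : R * R, A p -> ~ (c < snd p < d)).

(* Main.v *)
Require Import Defs.
From Stdlib Require Import Reals Lra Lia Classical.
From Coquelicot Require Import Coquelicot.
Open Scope R_scope.

Lemma Series_nonneg (a : nat -> R) : (forall n, 0 <= a n) -> ex_series a -> 0 <= Series a.
Proof.
  intros H He.
  assert (E : Series (fun _ : nat => 0) = 0).
  { rewrite (Series_ext _ (fun n => 0 * a n)) by (intros; ring).
    rewrite Series_scal_l; ring. }
  rewrite <- E. apply Series_le; auto. intros; split; [lra| auto].
Qed.

Lemma restrict_ex (B : nat -> bool) u : (forall n, 0 <= u n) -> ex_series u -> ex_series (restrict B u).
Proof.
  intros H He. apply (@ex_series_le R_AbsRing R_CompleteNormedModule _ u); auto.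
  intros n. unfold restrict. destruct (B n).
  - change (Rabs (u n) <= u n). rewrite Rabs_right; [lra| apply Rle_ge, H].
  - change (Rabs 0 <= u n). rewrite Rabs_R0; apply H.
Qed.

Lemma term_le_Series (a : nat -> R) N : (forall n, 0 <= a n) -> ex_series a -> a N <= Series a.
Proof.
  intros H He. rewrite (Series_incr_n a (S N)); [| apply Nat.lt_0_succ | exact He].
  simpl Init.Nat.pred.
  assert (0 <= Series (fun k => a (S N + k)%nat)).
  { apply Series_nonneg; auto.
    apply (@ex_series_incr_n R_AbsRing R_NormedModule a (S N)); auto. }
  destruct N; simpl sum_f_R0; [lra|].
  pose proof (cond_pos_sum a N H). lra.
Qed.

Lemma restrict_nonneg B u : (forall n, 0 <= u n) -> forall n, 0 <= restrict B u n.
Proof. intros H n; unfold restrict; destruct (B n); auto; lra. Qed.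

Definition Ab (u : nat -> R) k n : bool := if Rlt_dec (u n) (u k) then true else false.

Lemma sum_below_restrict u k : sum_below u k = Series (restrict (Ab u k) u).
Proof. unfold sum_below, restrict, Ab. apply Series_ext; intro n. destruct Rlt_dec; auto. Qed.

(* sums over B: either B contains n with u n >= u k, giving >= u k, or bounded by sum_below *)
Lemma dich (B : nat -> bool) (u : nat -> R) k :
  (exists n, B n = true /\ ~ u n < u k) \/ (forall n, B n = true -> u n < u k).
Proof.
  destruct (classic (exists n, B n = true /\ ~ u n < u k)) as [H|H]; [left; auto|right].
  intros n Hn. apply NNPP. intro C. apply H. eauto.
Qed.

Lemma big_case B u k n : (forall m, 0 <= u m) -> ex_series u -> B n = true -> ~ u n < u k ->
  u k <= Series (restrict B u).
Proof.
  intros H He Bn Hn.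
  pose proof (term_le_Series (restrict B u) n (restrict_nonneg B u H) (restrict_ex B u H He)).
  unfold restrict at 1 in H0. rewrite Bn in H0. lra.
Qed.

Lemma small_case (B : nat -> bool) u (C : nat -> bool) : (forall m, 0 <= u m) -> ex_series u ->
  (forall n, B n = true -> C n = true) ->
  Series (restrict B u) <= Series (restrict C u).
Proof.
  intros H He HBC. apply Series_le; [|apply restrict_ex; auto].
  intro n. unfold restrict. destruct (B n) eqn:E.
  - rewrite (HBC n E). split; [apply H|lra].
  - destruct (C n); split; try lra; apply H.
Qed.


Definition single k n : bool := Nat.eqb n k.

Lemma single_series u k : (forall m, 0 <= u m) -> ex_series u -> is_series (restrict (single k) u) (u k).
Proof.
  intros H He.
  assert (Ex := restrict_ex (single k) u H He).
  replace (u k) with (Series (restrict (single k) u)); [apply Series_correct; auto|].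
  rewrite (Series_incr_n _ (S k)); [| apply Nat.lt_0_succ | exact Ex].
  rewrite (Series_ext _ (fun n => 0 * u n)).
  2:{ intro n. unfold restrict, single. destruct (Nat.eqb_spec (S k + n) k); [lia|ring]. }
  rewrite Series_scal_l. simpl Init.Nat.pred.
  assert (Z : forall m, (m < k)%nat -> sum_f_R0 (restrict (single k) u) m = 0).
  { induction m; intros Hm; simpl.
    - unfold restrict, single. destruct (Nat.eqb_spec 0 k); [lia|ring].
    - rewrite IHm by lia. unfold restrict, single. destruct (Nat.eqb_spec (S m) k); [lia|ring]. }
  destruct k as [|k'].
  - simpl. unfold restrict, single. simpl. ring.
  - simpl sum_f_R0. rewrite Z by lia. unfold restrict, single. rewrite Nat.eqb_refl. ring.
Qed.

Lemma Ab_series u v k : (forall m, 0 <= v m) -> ex_series v ->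
  is_series (restrict (Ab u k) v) (Series (restrict (Ab u k) v)).
Proof. intros; apply Series_correct, restrict_ex; auto. Qed.

Lemma below_series u k : (forall m, 0 <= u m) -> ex_series u ->
  is_series (restrict (Ab u k) u) (sum_below u k).
Proof. intros; rewrite sum_below_restrict; apply Ab_series; auto. Qed.

Lemma gap_core (u : nat -> R) k (B : nat -> bool) (hu : forall n, 0 <= u n) (hc : ex_series u) :
  ~ (sum_below u k < Series (restrict B u) < u k).
Proof.
  intros [H1 H2]. destruct (dich B u k) as [[n [Bn Hn]]|H].
  - pose proof (big_case B u k n hu hc Bn Hn). lra.
  - assert (Series (restrict B u) <= sum_below u k).
    { rewrite sum_below_restrict. apply small_case; auto.
      intros n Bn. unfold Ab. destruct Rlt_dec; auto; exfalso; auto. }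
    lra.
Qed.

Theorem mainTheorem16 (x y : nat -> R) (k : nat)
  (hx0 : forall n, 0 <= x n) (hy0 : forall n, 0 <= y n)
  (hxc : ex_series x) (hyc : ex_series y) :
  (x k > sum_below x k ->
     x_gap (achievement_set x y) (sum_below x k) (x k)) /\
  (y k > sum_below y k ->
     y_gap (achievement_set x y) (sum_below y k) (y k)) /\
  ((forall n, x n < x k <-> y n < y k) ->
   x k > sum_below x k -> y k > sum_below y k ->
     rect_gap (achievement_set x y) (sum_below x k) (x k) (sum_below y k) (y k)).
Proof.
  split; [|split].
  - intro Hk. split; [lra|split].
    + exists (Series (restrict (Ab x k) y)), (y k). split.
      * exists (Ab x k); split; simpl; [apply below_series|apply Ab_series]; auto.
      * exists (single k); split; simpl; apply single_series; auto.
    + intros [px py] [B [H1 H2]]. simpl in *. rewrite <- (is_series_unique _ _ H1).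
      apply gap_core; auto.
  - intro Hk. split; [lra|split].
    + exists (Series (restrict (Ab y k) x)), (x k). split.
      * exists (Ab y k); split; simpl; [apply Ab_series|apply below_series]; auto.
      * exists (single k); split; simpl; apply single_series; auto.
    + intros [px py] [B [H1 H2]]. simpl in *. rewrite <- (is_series_unique _ _ H2).
      apply gap_core; auto.
  - intros Heq Hkx Hky. split; [lra|split; [lra|]].
    assert (AbE : forall n, Ab x k n = Ab y k n).
    { intro n. unfold Ab. specialize (Heq n).
      destruct (Rlt_dec (x n) (x k)), (Rlt_dec (y n) (y k)); tauto. }
    intros [px py]; simpl; split.
    + intros [[Hb1 Hb2] [B [H1 H2]]].
      simpl in H1, H2. apply is_series_unique in H1; apply is_series_unique in H2; subst px py.
      destruct (dich B x k) as [[n [Bn Hn]]|H].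
      * right. pose proof (big_case B x k n hx0 hxc Bn Hn).
        assert (Hn' : ~ y n < y k) by (rewrite <- Heq; auto).
        pose proof (big_case B y k n hy0 hyc Bn Hn').
        f_equal; lra.
      * left. assert (Series (restrict B x) <= sum_below x k).
        { rewrite sum_below_restrict. apply small_case; auto.
          intros n Bn. unfold Ab. destruct Rlt_dec; auto; exfalso; auto. }
        assert (Series (restrict B y) <= sum_below y k).
        { rewrite sum_below_restrict. apply small_case; auto.
          intros n Bn. unfold Ab. destruct Rlt_dec; auto; exfalso; apply n0, Heq; auto. }
        f_equal; lra.
    + intros [E|E]; injection E; intros -> ->; (split; [lra|]).
      * exists (Ab x k); split; [apply below_series; auto|].
        apply (is_series_ext (restrict (Ab y k) y)).
        { intro n; unfold restrict; rewrite AbE; auto. }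
        apply below_series; auto.
      * exists (single k); split; apply single_series; auto.
Qed.
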